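(* Let $(G,N,\theta)_{\mathcal H}$ and $(H,M,\varphi)_{\mathcal H}$ be $\mathcal H$-triples with $H\le G$ satisfying: (i) $G=NH$, $N\cap H=M$, $\mathbf C_G(N)\subseteq H$; and (ii) $(H\times\mathcal H)_\theta=(H\times\mathcal H)_\varphi$. Write $A=(H\times\mathcal H)_\theta$. Let $\mathcal P$ and $\mathcal P'$ be projective representations of $G_\theta$ and $H_\varphi$ associated with $\theta$ and $\varphi$ respectively, with entries in $\mathbb Q^{\mathrm{ab}}$, whose factor sets $\alpha,\alpha'$ take root-of-unity values, with $\alpha$ and $\alpha'$ equal on $H_\theta\times H_\theta$, and such that for each $c\in\mathbf C_G(N)$ the scalar matrices $\mathcal P(c)$ and $\mathcal P'(c)$ correspond to the same scalar. Then the condition ''$\mu_a$ and $\mu'_a$ agree on $H_\theta$'' holds for every $a\in A$ if and only if it holds for every $a$ in some complete set of representatives of the cosets of $H_\theta$ (identified with $H_\theta\times\{1\}$) in $A$.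
   Context: All groups are finite; $p$ is a fixed prime. $\mathbb Q^{\mathrm{ab}}\subseteq\mathbb C$ is generated by all roots of unity, $\mathcal G=\mathrm{Gal}(\mathbb Q^{\mathrm{ab}}/\mathbb Q)$, $\mathcal H\le\mathcal G$ consists of those $\sigma$ for which there is an integer $f$ with $\sigma(\xi)=\xi^{p^f}$ for all roots of unity $\xi$ of order prime to $p$. For $N\trianglelefteq G$, $\theta\in\mathrm{Irr}(N)$, $g\in G$, $\sigma\in\mathcal G$: $\theta^{g\sigma}(n)=\sigma(\theta(gng^{-1}))$; $(H\times\mathcal H)_\theta$ is the stabilizer; $\theta^{\mathcal H}$ the $\mathcal H$-orbit; $G_{\theta^{\mathcal H}}=\{g:\theta^g\in\theta^{\mathcal H}\}$. $(G,N,\theta)_{\mathcal H}$ is an $\mathcal H$-triple if $N\trianglelefteq G$, $\theta\in\mathrm{Irr}(N)$, $G_{\theta^{\mathcal H}}=G$. Projective representation $\mathcal P$ with factor set $\alpha$: $\mathcal P(x)\mathcal P(y)=\alpha(x,y)\mathcal P(xy)$. For $G$-invariant $\theta$, $\mathcal P$ is associated with $\theta$ if $\mathcal P_N$ affords $\theta$ and $\mathcal P(ng)=\mathcal P(n)\mathcal P(g)$, $\mathcal P(gn)=\mathcal P(g)\mathcal P(n)$. For $a=(x,\sigma)$ with $\theta^{x\sigma}=\theta$, $\mathcal P^{a}(y)=\sigma(\mathcal P(xyx^{-1}))$ (entrywise), and $\mu_a:G_\theta\to\mathbb C^\times$ is the unique function, constant on $N$-cosets, $\mu_a(1)=1$,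 such that $\mathcal P^a(y)=\mu_a(y)L^{-1}\mathcal P(y)L$ for all $y$ and some invertible $L$; $\mu'_a:H_\varphi\to\mathbb C^\times$ is defined in the same way from $\mathcal P'$ and $\varphi$. *)

(* Defs.v *)
From mathcomp Require Import all_boot all_order all_algebra all_fingroup all_solvable all_field all_character.
Set Implicit Arguments. Unset Strict Implicit. Unset Printing Implicit Defensive.
Import GroupScope GRing.Theory Num.Theory.
Local Open Scope ring_scope.

(* Galois automorphisms are modelled as ring endomorphisms (= automorphisms)
   of algC; only their restriction to Q^ab (generated by roots of unity) matters. *)
Notation galT := {rmorphism algC -> algC}.

(* sigma lies in (the preimage of) the group \mathcal H attached to the prime p *)
Definition inHgal (p : nat) (s : galT) : Prop :=
  exists f : nat, forall (z : algC) (m : nat),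
    (0 < m)%N -> coprime m p -> z ^+ m = 1 -> s z = z ^+ (p ^ f).

(* equality of the restrictions to Q^ab (i.e. equality in Gal(Q^ab/Q)) *)
Definition galEq (s t : galT) : Prop :=
  forall (z : algC) (m : nat), (0 < m)%N -> z ^+ m = 1 -> s z = t z.

Definition in_Qab (z : algC) : Prop :=
  exists (m : nat) (zeta : algC) (q : {poly rat}),
    [/\ (0 < m)%N, zeta ^+ m = 1 & z = (map_poly ratr q).[zeta]].

Definition rootof1 (z : algC) : Prop := exists2 m : nat, (0 < m)%N & z ^+ m = 1.

Section Defs.
Variable gT : finGroupType.

Definition stab (K : {set gT}) (B : {set gT}) (theta : 'CF(B)) : {set gT} :=
  [set x in K | (theta ^ x)%CF == theta].

(* (G, N, theta)_H is an H-triple; theta^{g sigma}(n) = sigma(theta(g n g^-1))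
   is cfAut sigma (theta ^ g)%CF. *)
Definition Htriple (p : nat) (G N : {group gT}) (theta : 'CF(N)) : Prop :=
  [/\ N <| G, theta \in irr N &
      forall g, g \in G -> exists2 s : galT, inHgal p s & (theta ^ g)%CF = cfAut s theta].

Definition proj_rep (K : {set gT}) (n : nat) (P : gT -> 'M[algC]_n)
    (alpha : gT -> gT -> algC) : Prop :=
  (forall x, x \in K -> P x \in unitmx) /\
  (forall x y, x \in K -> y \in K -> P x *m P y = alpha x y *: P (x * y)%g).

Definition assoc_with (N : {group gT}) (theta : 'CF(N)) (K : {set gT}) (n : nat)
    (P : gT -> 'M[algC]_n) : Prop :=
  [/\ P 1%g = 1%:M,
      forall x y, x \in N -> y \in N -> P (x * y)%g = P x *m P y,
      forall x, x \in N -> \tr (P x) = theta x &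
      forall m g, m \in N -> g \in K ->
        P (m * g)%g = P m *m P g /\ P (g * m)%g = P g *m P m].

Definition entries_in_Qab (K : {set gT}) (n : nat) (P : gT -> 'M[algC]_n) : Prop :=
  forall x i j, x \in K -> in_Qab (P x i j).

(* mu is (a candidate for) mu_a, a = (x, s), built from P on K, constant on N-cosets:
   P^a(y) = s(P(x y x^-1)) = mu(y) L^-1 P(y) L. *)
Definition is_mu (K N : {set gT}) (n : nat) (P : gT -> 'M[algC]_n)
    (x : gT) (s : galT) (mu : gT -> algC) : Prop :=
  [/\ mu 1%g = 1,
      forall y, y \in K -> mu y != 0,
      forall y m, y \in K -> m \in N -> mu (m * y)%g = mu y &
      exists2 L : 'M[algC]_n, L \in unitmx &
        forall y, y \in K ->
          map_mx s (P (x * y * x^-1)%g) = mu y *: (invmx L *m P y *m L)].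

End Defs.

(* Main.v *)
Require Import Defs.
From mathcomp Require Import all_boot all_order all_algebra all_fingroup all_solvable all_field all_character.
From mathcomp Require Import ring.
Import GroupScope GRing.Theory Num.Theory.
Local Open Scope ring_scope.
Set Implicit Arguments. Unset Strict Implicit. Unset Printing Implicit Defensive.

Section Transport.
Variables (gT : finGroupType) (N K : {group gT}) (theta : 'CF(N)) (n : nat)
  (P : gT -> 'M[algC]_n) (alpha : gT -> gT -> algC).
Hypotheses (n_gt0 : (0 < n)%N) (PR : proj_rep K P alpha) (AS : assoc_with theta K P)
  (sNK : N \subset K) (nNK : K \subset 'N(N)).

Lemma scal_cancel (a b : algC) (A : 'M[algC]_n) :
  A \in unitmx -> a *: A = b *: A -> a = b.
Proof.
move=> uA e.
have : (a *: A) *m invmx A = (b *: A) *m invmx A by rewrite e.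
rewrite -!scalemxAl mulmxV // => /matrixP /(_ (Ordinal n_gt0) (Ordinal n_gt0)).
by rewrite !mxE eqxx /= !mulr1n !mulr1.
Qed.

Lemma PU x : x \in K -> P x \in unitmx.
Proof. by case: PR => h _; apply: h. Qed.

Lemma PM x y : x \in K -> y \in K -> P x *m P y = alpha x y *: P (x * y)%g.
Proof. by case: PR => _ h; apply: h. Qed.

Lemma unit_neq0 (A : 'M[algC]_n) : A \in unitmx -> A != 0.
Proof.
move=> uA; apply/eqP=> A0; have := mulVmx uA; rewrite A0 mulmx0.
move/matrixP/(_ (Ordinal n_gt0) (Ordinal n_gt0)); rewrite !mxE eqxx /=.
by move/eqP; rewrite eq_sym oner_eq0.
Qed.

Lemma alpha_neq0 x y : x \in K -> y \in K -> alpha x y != 0.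
Proof.
move=> xK yK; apply/eqP=> a0.
have := PM xK yK; rewrite a0 scale0r => e.
have : P x *m P y \in unitmx by rewrite unitmx_mul !PU.
by rewrite e => /unit_neq0; rewrite eqxx.
Qed.


Lemma P1 : P 1%g = 1%:M.
Proof. by case: AS. Qed.

Lemma PinvE g : g \in K -> P g^-1 = alpha g g^-1 *: invmx (P g).
Proof.
move=> gK; have e3 := PM gK (groupVr gK); rewrite mulgV P1 in e3.
have := congr1 (mulmx (invmx (P g))) e3.
by rewrite mulmxA mulVmx ?PU // mul1mx -scalemxAr mulmx1.
Qed.

Definition cc g w := alpha g g^-1 / (alpha g w * alpha (g * w)%g g^-1).

Lemma cc_neq0 g w : g \in K -> w \in K -> cc g w != 0.
Proof.
move=> gK wK; rewrite /cc mulf_neq0 ?invr_eq0 ?mulf_neq0 ?alpha_neq0 ?groupV ?groupM //.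
Qed.

Lemma Pconj g w : g \in K -> w \in K ->
  P (g * w * g^-1)%g = cc g w *: (P g *m P w *m invmx (P g)).
Proof.
move=> gK wK.
have e1 := PM gK wK.
have e2 := PM (groupM gK wK) (groupVr gK).
have a1 := alpha_neq0 gK wK.
have a2 := alpha_neq0 (groupM gK wK) (groupVr gK).
have a3 := alpha_neq0 gK (groupVr gK).
rewrite e1 -scalemxAl scalerA.
have -> : invmx (P g) = (alpha g g^-1)^-1 *: P g^-1.
  by rewrite PinvE // scalerA mulVf // scale1r.
rewrite -scalemxAr scalerA e2 scalerA /cc.
rewrite -[LHS]scale1r; congr (_ *: _).
by field; rewrite a1 a2 a3.
Qed.


Lemma AS4 m g : m \in N -> g \in K -> P (m * g)%g = P m *m P g /\ P (g * m)%g = P g *m P m.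
Proof. by case: AS => _ _ _ h; apply: h. Qed.

Lemma conjN g m : g \in K -> m \in N -> (g * m * g^-1)%g \in N.
Proof.
move=> gK mN; have gN : (g^-1 \in 'N(N))%g by rewrite groupV (subsetP nNK).
suff -> : (g * m * g^-1 = m ^ g^-1)%g by rewrite memJ_norm.
by rewrite conjgE invgK mulgA.
Qed.

Lemma PNconj g m : g \in K -> m \in N -> P (g * m * g^-1)%g = P g *m P m *m invmx (P g).
Proof.
move=> gK mN; have m'N := conjN gK mN.
have [e1 _] := AS4 m'N gK; rewrite mulgKV in e1.
have [_ e2] := AS4 mN gK.
rewrite -e2 e1 -mulmxA mulmxV ?PU // mulmx1 //.
Qed.

Lemma cc_N g m : g \in K -> m \in N -> cc g m = 1.
Proof.
move=> gK mN; have mK := subsetP sNK m mN.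
apply: (@scal_cancel _ _ (P g *m P m *m invmx (P g))).
  by rewrite !unitmx_mul unitmx_inv !PU.
by rewrite -Pconj // scale1r PNconj.
Qed.

Lemma cc_Nmul g m w : g \in K -> m \in N -> w \in K -> cc g (m * w)%g = cc g w.
Proof.
move=> gK mN wK; have mK := subsetP sNK m mN.
have e : (g * (m * w) * g^-1 = (g * m * g^-1) * (g * w * g^-1))%g.
  by rewrite !mulgA mulgKV.
have [e1 _] := AS4 (conjN gK mN) (groupM (groupM gK wK) (groupVr gK)).
have [e2 _] := AS4 mN wK.
apply: (@scal_cancel _ _ (P g *m P m *m P w *m invmx (P g))).
  by rewrite !unitmx_mul unitmx_inv !PU.
rewrite -[P g *m P m *m P w]mulmxA -e2 -Pconj ?groupM // e e1 PNconj // Pconj //.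
rewrite -!scalemxAr; congr (_ *: _).
by rewrite e2 !mulmxA -[_ *m invmx (P g) *m P g]mulmxA mulVmx ?PU // mulmx1.
Qed.


Lemma invmx_uniqr (A B : 'M[algC]_n) : A \in unitmx -> A *m B = 1%:M -> invmx A = B.
Proof. by move=> uA AB; rewrite -[invmx A]mulmx1 -AB mulmxA mulVmx // mul1mx. Qed.

Lemma mu_transport (x g : gT) (s : galT) (mu : gT -> algC) :
  g \in K -> (forall z, z \in K -> (x * z * x^-1)%g \in K) ->
  (forall m, m \in N -> (x * m * x^-1)%g \in N) ->
  is_mu K N P x s mu ->
  is_mu K N P (g * x)%g s (fun z => s (cc g (x * z * x^-1)%g) * mu z).
Proof.
move=> gK nxK nxN [mu1 mu0 muN [L uL hL]].
split.
- by rewrite mulg1 mulgV cc_N // rmorph1 mu1 mulr1.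
- by move=> y yK; rewrite mulf_neq0 ?mu0 // fmorph_eq0 cc_neq0 ?nxK.
- move=> y m yK mN; rewrite muN //.
  have -> : (x * (m * y) * x^-1 = (x * m * x^-1) * (x * y * x^-1))%g.
    by rewrite !mulgA mulgKV.
  by rewrite cc_Nmul ?nxN ?nxK.
set S := map_mx s (P g).
have uS : S \in unitmx by rewrite map_unitmx PU.
exists (L *m invmx S); first by rewrite unitmx_mul uL unitmx_inv.
have -> : invmx (L *m invmx S) = S *m invmx L.
  apply: invmx_uniqr; first by rewrite unitmx_mul uL unitmx_inv.
  by rewrite mulmxA -[L *m _ *m S]mulmxA mulVmx // mulmx1 mulmxV.
move=> y yK.
have -> : (g * x * y * (g * x)^-1 = g * (x * y * x^-1) * g^-1)%g.
  by rewrite invMg !mulgA.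
rewrite Pconj ?nxK // map_mxZ !map_mxM map_invmx hL // -/S.
rewrite -scalemxAr -scalemxAl scalerA; congr (_ *: _).
by rewrite !mulmxA.
Qed.

End Transport.

Lemma galEq_Qab (s t : galT) z : galEq s t -> in_Qab z -> s z = t z.
Proof.
move=> st [m [zeta [q [m0 zm ->]]]].
rewrite -!horner_map (st zeta m m0 zm).
suff E : forall u : galT, map_poly u (map_poly ratr q) = map_poly ratr q by rewrite !E.
move=> u; rewrite -map_poly_comp; apply: eq_map_poly => a /=.
by rewrite fmorph_rat.
Qed.

Lemma is_mu_gal (gT : finGroupType) (K N : {set gT}) n (P : gT -> 'M[algC]_n) x (s t : galT) mu :
  galEq s t -> entries_in_Qab K P -> (forall z, z \in K -> (x * z * x^-1)%g \in K) ->
  is_mu K N P x s mu -> is_mu K N P x t mu.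
Proof.
move=> st QP nxK [h1 h2 h3 [L uL hL]]; split=> //; exists L => // y yK.
rewrite -hL //; apply/matrixP=> i j; rewrite !mxE.
by rewrite (galEq_Qab st) //; apply: QP; rewrite nxK.
Qed.

Lemma cfAut_idfun (gT : finGroupType) (B : {set gT}) (phi : 'CF(B)) :
  cfAut (idfun : galT) phi = phi.
Proof. by apply/cfunP=> z; rewrite cfunE. Qed.

Lemma stab_inertia (gT : finGroupType) (L B : {group gT}) (phi : 'CF(B)) :
  L \subset 'N(B) -> stab L phi = ('I_L[phi])%g.
Proof.
move=> nBL; apply/setP=> z; rewrite !inE.
case zL: (z \in L) => //=; by have := subsetP nBL z zL; rewrite inE => ->.
Qed.

Lemma conj_fix (gT : finGroupType) (B : {group gT}) (phi : 'CF(B)) x (s : galT) z :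
  x \in 'N(B) -> z \in 'N(B) -> cfAut s (phi ^ x)%CF = phi -> (phi ^ z)%CF = phi ->
  (phi ^ (x * z * x^-1))%CF = phi.
Proof.
move=> nx nz hx hz.
have e : ((phi ^ x) ^ z)%CF = (phi ^ x)%CF.
  by apply: (@cfAut_inj s gT B); rewrite cfAutConjg hx.
rewrite !cfConjgMnorm ?groupM ?groupV // e -cfConjgMnorm ?groupV // mulgV.
exact: cfConjgJ1.
Qed.

Lemma stab_conj (gT : finGroupType) (L B : {group gT}) (phi : 'CF(B)) x (s : galT) z :
  L \subset 'N(B) -> x \in L -> cfAut s (phi ^ x)%CF = phi -> z \in stab L phi ->
  (x * z * x^-1)%g \in stab L phi.
Proof.
move=> nBL xL hx; rewrite !inE => /andP[zL /eqP hz].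
rewrite !groupM ?groupV //=; apply/eqP.
by apply: (conj_fix (s := s)); rewrite ?(subsetP nBL).
Qed.

Theorem lemma1p8 (p : nat) (gT : finGroupType) (G N H M : {group gT})
    (theta : 'CF(N)) (phi : 'CF(M)) (n n' : nat)
    (P : gT -> 'M[algC]_n) (P' : gT -> 'M[algC]_n')
    (alpha alpha' : gT -> gT -> algC) :
  prime p ->
  Htriple p G theta -> Htriple p H phi -> H \subset G ->
  (* (i) *)
  (N * H)%g = G -> N :&: H = M -> 'C_G(N) \subset H ->
  (* (ii) (H x \mathcal H)_theta = (H x \mathcal H)_phi *)
  (forall x (s : galT), x \in H -> inHgal p s ->
     cfAut s (theta ^ x)%CF = theta <-> cfAut s (phi ^ x)%CF = phi) ->
  proj_rep (stab G theta) P alpha -> assoc_with theta (stab G theta) P ->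
  entries_in_Qab (stab G theta) P ->
  proj_rep (stab H phi) P' alpha' -> assoc_with phi (stab H phi) P' ->
  entries_in_Qab (stab H phi) P' ->
  (forall x y, x \in stab G theta -> y \in stab G theta -> rootof1 (alpha x y)) ->
  (forall x y, x \in stab H phi -> y \in stab H phi -> rootof1 (alpha' x y)) ->
  (forall x y, x \in stab H theta -> y \in stab H theta -> alpha x y = alpha' x y) ->
  (forall c, c \in 'C_G(N) -> exists lam : algC, P c = lam%:M /\ P' c = lam%:M) ->
  let inA := fun x (s : galT) =>
    [/\ x \in H, inHgal p s & cfAut s (theta ^ x)%CF = theta] in
  let cond := fun x (s : galT) =>
    forall mu mu' : gT -> algC,
      is_mu (stab G theta) N P x s mu -> is_mu (stab H phi) M P' x s mu' ->
      forall y, y \in stab H theta -> mu y = mu' y in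
  (* (x,s) and (y,t) lie in the same coset (H_theta x 1)(y,t) *)
  let samecoset := fun x (s : galT) y (t : galT) =>
    galEq s t /\ (x * y^-1)%g \in stab H theta in
  (forall x s, inA x s -> cond x s) <->
  (exists T : gT -> galT -> Prop,
     [/\ forall x s, T x s -> inA x s,
         forall x s, inA x s -> exists y t, [/\ T y t & samecoset x s y t],
         forall x s y t, T x s -> T y t -> samecoset x s y t -> x = y /\ galEq s t &
         forall x s, T x s -> cond x s]).
Proof.
move=> pr [nNG thirr _] [nMH phiirr _] sHG eNH eM sC hii PR AS QP PR' AS' QP' ra ra' aeq Pc.
have nNG' := normal_norm nNG; have nMH' := normal_norm nMH.
have nNH : H \subset 'N(N) := subset_trans sHG nNG'.
have idH : inHgal p (idfun : galT) by exists 0%N => z m _ _ _; rewrite expn0 expr1.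
have eHphi : stab H phi = stab H theta.
  apply/setP=> z; rewrite !inE; case zH: (z \in H) => //=.
  have := hii z idfun zH idH; rewrite !cfAut_idfun => -[h1 h2].
  by apply/idP/idP => /eqP h; apply/eqP; [apply: h2 | apply: h1].
have eKG : stab G theta = ('I_G[theta])%g := stab_inertia theta nNG'.
have eHT : stab H theta = ('I_H[theta])%g := stab_inertia theta nNH.
have th1 : theta 1%g != 0 by case/irrP: thirr => i ->; apply: irr1_neq0.
have ph1 : phi 1%g != 0 by case/irrP: phiirr => i ->; apply: irr1_neq0.
have n_gt0 : (0 < n)%N.
  case: AS => P1 _ trP _; rewrite lt0n; apply/eqP => n0; move: th1.
  by rewrite -trP // P1 mxtrace1 n0 eqxx.
have n'_gt0 : (0 < n')%N.
  case: AS' => P1 _ trP _; rewrite lt0n; apply/eqP => n0; move: ph1.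
  by rewrite -trP // P1 mxtrace1 n0 eqxx.
rewrite eHphi in PR' AS' QP' *.
have nxK (L : {group gT}) x (s : galT) w : H \subset L -> L \subset 'N(N) -> x \in H ->
    cfAut s (theta ^ x)%CF = theta -> w \in stab L theta -> (x * w * x^-1)%g \in stab L theta.
  by move=> sHL nL xH hx; exact: (stab_conj nL (subsetP sHL x xH) hx).
have nxB (B : {group gT}) x m : H \subset 'N(B) -> x \in H -> m \in B -> (x * m * x^-1)%g \in B.
  move=> nBH xH mB; have xN : (x^-1 \in 'N(B))%g by rewrite groupV (subsetP nBH).
  suff -> : (x * m * x^-1 = m ^ x^-1)%g by rewrite memJ_norm.
  by rewrite conjgE invgK mulgA.
have sNKG : N \subset 'I_G[theta].
  by rewrite subsetI normal_sub // sub_inertia.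
have nNKG : 'I_G[theta] \subset 'N(N) by rewrite (subset_trans (subsetIl _ _)).
have sMKH : M \subset 'I_H[theta].
  by rewrite -eHT -eHphi stab_inertia // subsetI normal_sub // sub_inertia.
have nMKH : 'I_H[theta] \subset 'N(M) by rewrite (subset_trans (subsetIl _ _)).
have sHTG : stab H theta \subset stab G theta.
  by apply/subsetP=> z; rewrite !inE => /andP[zH ->]; rewrite (subsetP sHG).
move=> inA cond samecoset.
split.
  move=> hall.
  exists (fun x s => inA x s /\ x = repr (('I_H[theta])%G :* x)).
  split.
  - by move=> x s [].
  - move=> x s xA.
    have [xH sH hx] := (xA : [/\ x \in H, inHgal p s & cfAut s (theta ^ x)%CF = theta]).
    set y := repr (('I_H[theta])%G :* x).
    have yx : y \in ('I_H[theta])%G :* x := mem_repr_rcoset _ x.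
    have hI : (y * x^-1)%g \in ('I_H[theta])%G by rewrite -mem_rcoset.
    have ey : ('I_H[theta])%G :* y = ('I_H[theta])%G :* x by apply/rcoset_eqP.
    have hH : (y * x^-1)%g \in H by case/setIP: hI.
    have hth : (theta ^ (y * x^-1)%g)%CF = theta.
      by case/setIP: hI => _; rewrite inE => /andP[_ /eqP].
    have yH : y \in H by rewrite -(mulgKV x y) groupM.
    exists y, s; split.
      split; last by rewrite ey.
      split => //; rewrite -(mulgKV x y) cfConjgMnorm ?(subsetP nNH) ?groupM ?groupV //.
      by rewrite -[RHS]hx; congr (cfAut s (_ ^ x)%CF); exact: hth.
    split; first by move=> *.
    rewrite eHT; have -> : (x * y^-1 = (y * x^-1)^-1)%g by rewrite invMg invgK.
    by rewrite groupV.
  - move=> x s y t [xA ex] [yA ey] [st hxy]; split => //.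
    have E : ('I_H[theta])%G :* x = ('I_H[theta])%G :* y.
      by apply/rcoset_eqP; rewrite mem_rcoset /= -eHT.
    by rewrite ex ey E.
  - by move=> x s [xA _]; exact: hall.
case=> T [T1 T2 T3 T4] x s xA.
have [hx_H hx_s hx] := (xA : [/\ x \in H, inHgal p s & cfAut s (theta ^ x)%CF = theta]).
move=> mu mu' hmu hmu' z zHT.
have [y [t [Tyt [st xy]]]] := T2 x s xA.
have [yH tH hy] := (T1 y t Tyt : [/\ y \in H, inHgal p t & cfAut t (theta ^ y)%CF = theta]).
have cyt := T4 y t Tyt.
set g := (y * x^-1)%g.
have gHT : g \in stab H theta.
  have -> : g = ((x * y^-1)^-1)%g by rewrite invMg invgK.
  by rewrite eHT groupV; move: xy; rewrite eHT.
have egx : (g * x)%g = y by rewrite /g mulgKV.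
have PR1 : proj_rep ('I_G[theta])%G P alpha by rewrite /= -eKG.
have AS1 : assoc_with theta ('I_G[theta])%G P by rewrite /= -eKG.
have QP1 : entries_in_Qab ('I_G[theta])%G P by rewrite /= -eKG.
have PR2 : proj_rep ('I_H[theta])%G P' alpha' by rewrite /= -eHT.
have AS2 : assoc_with phi ('I_H[theta])%G P' by rewrite /= -eHT.
have QP2 : entries_in_Qab ('I_H[theta])%G P' by rewrite /= -eHT.
have nxKG w : w \in ('I_G[theta])%G -> (x * w * x^-1)%g \in ('I_G[theta])%G.
  by rewrite /= -eKG; exact: nxK G x s w sHG nNG' hx_H hx.
have nyKG w : w \in ('I_G[theta])%G -> (y * w * y^-1)%g \in ('I_G[theta])%G.
  by rewrite /= -eKG; exact: nxK G y t w sHG nNG' yH hy.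
have nxKH w : w \in ('I_H[theta])%G -> (x * w * x^-1)%g \in ('I_H[theta])%G.
  by rewrite /= -eHT; exact: nxK H x s w (subxx H) nNH hx_H hx.
have nyKH w : w \in ('I_H[theta])%G -> (y * w * y^-1)%g \in ('I_H[theta])%G.
  by rewrite /= -eHT; exact: nxK H y t w (subxx H) nNH yH hy.
have gKG : g \in ('I_G[theta])%G by rewrite /= -eKG (subsetP sHTG).
have gKH : g \in ('I_H[theta])%G by rewrite /= -eHT.
have hmu1 : is_mu ('I_G[theta])%G N P x s mu by rewrite /= -eKG.
have hmu2 : is_mu ('I_H[theta])%G M P' x s mu' by rewrite /= -eHT.
have h1 := mu_transport n_gt0 PR1 AS1 sNKG nNKG gKG nxKG (fun m => nxB N x m nNH hx_H) hmu1.
have h2 := mu_transport n'_gt0 PR2 AS2 sMKH nMKH gKH nxKH (fun m => nxB M x m nMH' hx_H) hmu2.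
rewrite egx in h1 h2.
have h1' := is_mu_gal st QP1 nyKG h1.
have h2' := is_mu_gal st QP2 nyKH h2.
rewrite /= -eKG in h1'; rewrite /= -eHT in h2'.
have := cyt _ _ h1' h2' z zHT => /= E.
set w := (x * z * x^-1)%g in E.
have wHT : w \in stab H theta by exact: nxK H x s z (subxx H) nNH hx_H hx zHT.
have ecc : cc alpha g w = cc alpha' g w.
  have gI := gHT; have wI := wHT; rewrite eHT in gI wI.
  rewrite /cc !aeq //.
  1: by rewrite eHT groupM.
  1,2: by rewrite eHT groupV.
rewrite -ecc in E.
apply: mulfI E; rewrite fmorph_eq0.
by apply: (cc_neq0 n_gt0 PR1); rewrite /= -eKG (subsetP sHTG).
Qed.
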